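(* Let $\alpha\in\{2,3,\ldots\}$, $n\in\mathbb{N}$ and $r\in\mathbb{Z}$, and set $n_*=\lfloor n/2^{\alpha-2}\rfloor$, $r_*=\lfloor r/2^{\alpha-2}\rfloor$. Then $$2^{-\left\lfloor\frac{n-2^{\alpha-1}}{\varphi(2^{\alpha})}\right\rfloor}\sum_{k\equiv r\ (\mathrm{mod}\ 2^{\alpha})}\binom nk\equiv1\pmod 2$$ if and only if $\binom{\{n\}_{2^{\alpha-2}}}{\{r\}_{2^{\alpha-2}}}$ is odd and one of the following holds: (a) $n_*>2$ and $n_*\not\equiv2r_*+2\pmod 4$; (b) $n_*=2$ and $2\mid r_*$.
   Context: $\varphi$ is Euler's totient function. $\{a\}_m$ denotes the least nonnegative residue of the integer $a$ modulo the positive integer $m$. The sum runs over all integers $k\equiv r\pmod{2^\alpha}$ with $\binom nk=0$ unless $0\le k\le n$; the left side is an integer (possibly multiplied by a nonnegative power of $2$ when the floor is negative). *)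

(* Defs.v *)
From HB Require Import structures.
From mathcomp Require Import all_boot all_order all_algebra.
Set Implicit Arguments. Unset Strict Implicit. Unset Printing Implicit Defensive.
Import Order.TTheory GRing.Theory Num.Theory.

(* S(n, r, alpha) = sum over integers k = r (mod 2^alpha) of 'C(n, k);
   terms with k outside [0, n] vanish, so we sum over 0 <= k <= n. *)
Definition binsum_mod (alpha n : nat) (r : int) : nat :=
  \sum_(0 <= k < n.+1 | ((k%:Z) == r %[mod (2 ^ alpha)%:Z])%Z) 'C(n, k).

Definition lucas_exp (alpha n : nat) : int :=
  ((n%:Z - (2 ^ alpha.-1)%:Z) %/ (totient (2 ^ alpha))%:Z)%Z.

Definition lhs_val (alpha n : nat) (r : int) : rat :=
  ((binsum_mod alpha n r)%:R : rat) * ((2 : rat) ^ (- lucas_exp alpha n)).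

(* Main.v *)
Require Import Defs.
From HB Require Import structures.
From mathcomp Require Import all_boot all_order all_algebra zify.
From Stdlib Require Import FunctionalExtensionality.
Import Order.TTheory GRing.Theory Num.Theory.

Lemma odd_bin_even_odd a c : odd 'C(2 * a, (2 * c).+1) = false.
Proof.
have := congr1 odd (mul_bin_left (2 * a) (2 * c)).
rewrite -mulnBr !oddM /=. idtac.
by rewrite oddM /=.
Qed.

Lemma odd_bin_even a c : odd 'C(2 * a, 2 * c) = odd 'C(a, c).
Proof.
elim: a c => [|a IH] [|c] //.
have -> : 2 * a.+1 = (2 * a).+2 by lia.
have -> : 2 * c.+1 = (2 * c).+2 by lia.
rewrite binS binS binS.
rewrite !oddD odd_bin_even_odd /= addbF.
have -> : (2 * c).+2 = 2 * c.+1 by lia.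
by rewrite IH IH -oddD -binS.
Qed.

Lemma lucas2 a b c d : (b < 2)%N -> (d < 2)%N ->
  odd 'C(2 * a + b, 2 * c + d) = odd 'C(a, c) && odd 'C(b, d).
Proof.
case: b => [|[|//]] _; case: d => [|[|//]] _.
- by rewrite !addn0 odd_bin_even andbT.
- by rewrite addn0 addn1 odd_bin_even_odd andbF.
- rewrite addn0 addn1; case: c => [|c].
    by rewrite !bin0.
  have -> : 2 * c.+1 = (2 * c).+1.+1 by lia.
  rewrite binS oddD odd_bin_even_odd /=.
  have -> : (2 * c).+2 = 2 * c.+1 by lia.
  by rewrite addbF odd_bin_even andbT.
- rewrite !addn1 binS oddD odd_bin_even_odd /= odd_bin_even. by rewrite andbT.
Qed.

Lemma lucasQ e a b c d : (b < 2 ^ e)%N -> (d < 2 ^ e)%N ->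
  odd 'C(2 ^ e * a + b, 2 ^ e * c + d) = odd 'C(a, c) && odd 'C(b, d).
Proof.
elim: e a b c d => [|e IH] a b c d.
  rewrite expn0 !mul1n => /[!ltnS]; rewrite !leqn0 => /eqP-> /eqP->.
  by rewrite !addn0 bin0 andbT.
move=> hb hd.
have Eb : b = 2 * b./2 + odd b by rewrite -[in LHS](odd_double_half b) -mul2n addnC.
have Ed : d = 2 * d./2 + odd d by rewrite -[in LHS](odd_double_half d) -mul2n addnC.
have hb' : (b./2 < 2 ^ e)%N by move: hb; rewrite expnS; lia.
have hd' : (d./2 < 2 ^ e)%N by move: hd; rewrite expnS; lia.
have -> : 2 ^ e.+1 * a + b = 2 * (2 ^ e * a + b./2) + odd b.
  by rewrite {2}Eb expnS; lia.
have -> : 2 ^ e.+1 * c + d = 2 * (2 ^ e * c + d./2) + odd d.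
  by rewrite {2}Ed expnS; lia.
rewrite lucas2 ?IH; try by case: odd.
have -> : 'C(b, d) = 'C(2 * b./2 + odd b, 2 * d./2 + odd d) by rewrite -Eb -Ed.
rewrite lucas2; try by case: odd.
Qed.

Lemma bin2q e j : (0 < j < 2 * 2 ^ e)%N ->
  (2 %| 'C(2 * 2 ^ e, j))%N /\ odd ('C(2 * 2 ^ e, j) %/ 2) = (j == 2 ^ e).
Proof.
set q := 2 ^ e => /andP [j0 jq].
have q0 : (0 < q)%N by rewrite expn_gt0.
have H := mul_bin_diag (2 * q) j.-1.
rewrite prednK // in H.
have Hev : (2 %| 'C(2 * q, j))%N.
  rewrite dvdn2; apply/negP => Hodd.
  have cop : coprime (2 ^ e.+1) 'C(2 * q, j) by apply: coprimeXl; rewrite coprime2n.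
  have : (2 ^ e.+1 %| j * 'C(2 * q, j))%N by rewrite -H expnS -/q dvdn_mulr.
  rewrite Gauss_dvdl // => /(dvdn_leq j0).
  by rewrite expnS -/q leqNgt jq.
split => //.
have Ex := divnK Hev.
set x := 'C(2 * q, j) %/ 2 in Ex *.
rewrite -Ex in H.
have H2 : q * 'C((2 * q).-1, j.-1) = j * x.
  apply/eqP; rewrite -(eqn_pmul2l (isT : (0 < 2)%N)); apply/eqP.
  by rewrite mulnA H; lia.
apply/idP/eqP => [Hodd|jq'].
  have cop : coprime q x by apply: coprimeXl; rewrite coprime2n.
  have : (q %| j * x)%N by rewrite -H2 dvdn_mulr.
  rewrite Gauss_dvdl // => /dvdnP [t Ht].
  rewrite Ht in j0 jq *.
  case: t Ht j0 jq => [|[|t]] //= Ht j0 jq; first by rewrite mul1n.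
  by move: jq; rewrite !mulSn; lia.
have : x = 'C((2 * q).-1, j.-1).
  apply/eqP; rewrite -(eqn_pmul2l q0); apply/eqP; by rewrite H2 jq'.
move=> ->; rewrite jq'.
have -> : (2 * q).-1 = q * 1 + q.-1 by lia.
have -> : q.-1 = q * 0 + q.-1 by lia.
rewrite lucasQ; try by rewrite -/q; lia.
by rewrite muln0 add0n binn bin0.
Qed.

Local Open Scope ring_scope.

Definition Pop (f : int -> int) : int -> int := fun r => f r + f (r - 1).
Definition delta (d : int) (t : int) : int := if (d %| t)%Z then 1 else 0.

Lemma iterP b f r : iter b Pop f r = \sum_(j < b.+1) ('C(b, j))%:Z * f (r - (j : nat)%:Z).
Proof.
elim: b r => [|b IH] r.
  by rewrite big_ord_recl big_ord0 /= subr0 addr0 mul1r.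
rewrite iterS /Pop !IH [RHS]big_ord_recl /= bin0 mul1r subr0.
under [X in _ = _ + X]eq_bigr => i _ do rewrite /bump leq0n add1n binS PoszD mulrDl.
rewrite big_split /= addrA.
congr (_ + _); last first.
  by apply: eq_bigr => i _; congr (_ * f _); lia.
rewrite big_ord_recl /= bin0 mul1r subr0; congr (_ + _).
rewrite big_ord_recr /= bin_small // mul0r addr0.
by apply: eq_bigr => i _; rewrite /bump leq0n add1n.
Qed.

Lemma binsum_iter alpha n r :
  (binsum_mod alpha n r)%:Z = iter n Pop (delta (2 ^ alpha)%:Z) r.
Proof.
rewrite iterP /binsum_mod big_mkcond /= big_mkord.
rewrite (big_morph Posz PoszD (erefl _)).
apply: eq_bigr => i _.
rewrite /delta eqz_mod_dvd -opprB rpredN.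
by case: ifP => _; rewrite ?mulr1 ?mulr0.
Qed.

Definition Kop (e : nat) (f : int -> int) : int -> int := fun r =>
  \sum_(j < (2 * 2 ^ e).-1) (('C(2 * 2 ^ e, j.+1) %/ 2)%N)%:Z * f (r - (j.+1)%:Z).
Definition Lop (e : nat) (f : int -> int) : int -> int := fun r => f r + Kop e f r.
Definition per (e : nat) (f : int -> int) := forall t, f (t + (2 * 2 ^ e)%N%:Z) = f t.
Definition aper (e : nat) (f : int -> int) := forall t, f (t + (2 * 2 ^ e)%N%:Z) = - f t.

Lemma iter_scal (Op : (int -> int) -> (int -> int))
  (HOp : forall c f, Op (fun r => c * f r) = fun r => c * Op f r) n c f :
  iter n Op (fun r => c * f r) = fun r => c * iter n Op f r.
Proof. by elim: n => [|n IH] //=; rewrite IH HOp. Qed.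

Lemma iter_pres (Q : (int -> int) -> Prop) Op (H : forall f, Q f -> Q (Op f)) n f :
  Q f -> Q (iter n Op f).
Proof. by move=> Qf; elim: n => [|n IH] //=; apply: H. Qed.

Lemma Pop_scal c f : Pop (fun r => c * f r) = fun r => c * Pop f r.
Proof. by apply: functional_extensionality => r; rewrite /Pop mulrDr. Qed.

Lemma Kop_scal e c f : Kop e (fun r => c * f r) = fun r => c * Kop e f r.
Proof.
apply: functional_extensionality => r; rewrite /Kop mulr_sumr.
by apply: eq_bigr => i _; rewrite mulrCA.
Qed.

Lemma Lop_scal e c f : Lop e (fun r => c * f r) = fun r => c * Lop e f r.
Proof. by apply: functional_extensionality => r; rewrite /Lop Kop_scal mulrDr. Qed.

Lemma Pop_per e f : per e f -> per e (Pop f).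
Proof. by move=> H t; rewrite /Pop H addrAC H. Qed.

Lemma Pop_aper e f : aper e f -> aper e (Pop f).
Proof. by move=> H t; rewrite /Pop H addrAC H opprD. Qed.

Lemma Kop_aper e f : aper e f -> aper e (Kop e f).
Proof.
move=> H t; rewrite /Kop -sumrN; apply: eq_bigr => i _.
by rewrite addrAC H mulrN.
Qed.

Lemma Kop_per e f : per e f -> per e (Kop e f).
Proof.
move=> H t; rewrite /Kop; apply: eq_bigr => i _.
by rewrite addrAC H.
Qed.

Lemma Lop_per e f : per e f -> per e (Lop e f).
Proof. by move=> H t; rewrite /Lop H Kop_per. Qed.

Lemma iter2q e f r : iter (2 * 2 ^ e) Pop f r =
  f r + f (r - (2 * 2 ^ e)%N%:Z) + 2 * Kop e f r.
Proof.
rewrite iterP /Kop big_ord_recl /= bin0 mul1r subr0 -addrA; congr (_ + _).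
have hN : (2 * 2 ^ e)%N = ((2 * 2 ^ e).-1).+1 by rewrite prednK // muln_gt0 expn_gt0.
have Hc : forall j, (j < (2 * 2 ^ e).-1)%N ->
   'C(2 * 2 ^ e, j.+1) = ('C(2 * 2 ^ e, j.+1) %/ 2 * 2)%N.
  move=> j hj; rewrite divnK //; case: (bin2q e (j.+1)) => //.
  by apply/andP; split => //; rewrite hN ltnS.
rewrite -(big_mkord xpredT (fun i => 'C(2 * 2 ^ e, bump 0 i)%:Z * f (r - (bump 0 i)%:Z))).
rewrite [in X in \sum_(0 <= i < X) _]hN big_nat_recr //=.
rewrite {3 4}/bump leq0n add1n -hN binn mul1r addrC; congr (_ + _).
rewrite big_mkord mulr_sumr; apply: eq_bigr => i _.
rewrite /bump leq0n add1n {1}(Hc i) // PoszM mulrA; congr (_ * _).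
by rewrite mulrC.
Qed.

Lemma iter2q_aper e f : aper e f -> iter (2 * 2 ^ e) Pop f = fun r => 2 * Kop e f r.
Proof.
move=> H; apply: functional_extensionality => r.
rewrite iter2q.
have := H (r - (2 * 2 ^ e)%N%:Z); rewrite subrK => ->.
by rewrite addNr add0r.
Qed.

Lemma iter2q_per e f : per e f -> iter (2 * 2 ^ e) Pop f = fun r => 2 * Lop e f r.
Proof.
move=> H; apply: functional_extensionality => r.
rewrite iter2q.
have := H (r - (2 * 2 ^ e)%N%:Z); rewrite subrK => <-.
by rewrite /Lop; lia.
Qed.

Lemma iterK e k f : aper e f ->
  iter (2 * 2 ^ e * k) Pop f = fun r => 2 ^+ k * iter k (Kop e) f r.
Proof.
elim: k f => [|k IH] f Hf.
  by apply: functional_extensionality => r; rewrite muln0 /= mul1r.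
rewrite mulnS addnC iterD iter2q_aper // iter_scal; last exact: Pop_scal.
rewrite IH; last exact: Kop_aper.
apply: functional_extensionality => r.
by rewrite iterSr exprS mulrA.
Qed.

Lemma iterL e k f : per e f ->
  iter (2 * 2 ^ e * k) Pop f = fun r => 2 ^+ k * iter k (Lop e) f r.
Proof.
elim: k f => [|k IH] f Hf.
  by apply: functional_extensionality => r; rewrite muln0 /= mul1r.
rewrite mulnS addnC iterD iter2q_per // iter_scal; last exact: Pop_scal.
rewrite IH; last exact: Lop_per.
apply: functional_extensionality => r.
by rewrite iterSr exprS mulrA.
Qed.

Lemma cq_dvd e j : (0 < j < 2 * 2 ^ e)%N -> (j != 2 ^ e)%N ->
  (2 %| (('C(2 * 2 ^ e, j) %/ 2)%N)%:Z)%Z.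
Proof.
move=> hj hjq; case: (bin2q _ _ hj) => _ Ho.
by rewrite dvdzE /= dvdn2 Ho.
Qed.

Lemma cq_odd e : (2 %| (('C(2 * 2 ^ e, 2 ^ e) %/ 2)%N)%:Z - 1)%Z.
Proof.
have hj : (0 < 2 ^ e < 2 * 2 ^ e)%N.
  by rewrite expn_gt0 /= -{1}(mul1n (2 ^ e)%N) ltn_pmul2r // expn_gt0.
case: (bin2q _ _ hj) => _; rewrite eqxx => Ho.
move: Ho; set c := ('C(_, _) %/ 2)%N => Ho.
have -> : c = (c./2 * 2).+1 by rewrite -{1}(odd_double_half c) Ho -mul2n mulnC.
apply/dvdzP; exists (c./2)%:Z; lia.
Qed.

Lemma Kop_mod2 e f r : (2 %| Kop e f r - f (r - (2 ^ e)%N%:Z))%Z.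
Proof.
have q0 : (0 < 2 ^ e)%N by rewrite expn_gt0.
have hj0 : ((2 ^ e).-1 < (2 * 2 ^ e).-1)%N.
  by lia.
rewrite /Kop (bigD1 (Ordinal hj0)) //= prednK //.
have -> : forall a b c : int, a + b - c = (a - c) + b by move=> *; lia.
apply: rpredD.
  have -> : forall a b : int, a * b - b = (a - 1) * b by move=> *; lia.
  by apply: dvdz_mulr; apply: cq_odd.
apply: rpred_sum => i hi; apply: dvdz_mulr; apply: cq_dvd.
  rewrite ltn0Sn /=; have := ltn_ord i; lia.
apply/eqP => hi'; move: hi => /eqP; apply; apply: val_inj => /=.
by move: hi'; lia.
Qed.

Lemma Lop_mod2 e f r : (2 %| Lop e f r - f r - f (r - (2 ^ e)%N%:Z))%Z.
Proof.
have := Kop_mod2 e f r.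
by rewrite /Lop; have -> : forall a b c : int, a + b - a - c = b - c by move=> *; lia.
Qed.

Lemma LLop_even e f r : per e f -> (2 %| Lop e (Lop e f) r)%Z.
Proof.
move=> H.
set q := (2 ^ e)%N%:Z.
have Hf : f (r - q - q) = f r.
  rewrite -H; congr f; rewrite /q (PoszM 2 (2 ^ e)%N); lia.
have D1 := Lop_mod2 e (Lop e f) r.
have D2 := Lop_mod2 e f r.
have D3 := Lop_mod2 e f (r - q).
rewrite -/q Hf in D1 D2 D3.
set a := Lop e (Lop e f) r in D1 *.
set b := Lop e f r in D1 D2.
set c := Lop e f (r - q) in D1 D3.
have -> : a = (a - b - c) + (b - f r - f (r - q)) + (c - f (r - q) - f r) + 2 * (f r + f (r - q)) by lia.
by apply: rpredD; [apply: rpredD; [apply: rpredD|] | apply: dvdz_mulr; apply: dvdzz].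
Qed.

Lemma delta_split (d : int) t : d != 0 ->
  delta d t = delta (d * 2) t + delta (d * 2) (t + d).
Proof.
move=> d0; rewrite /delta.
case: (boolP (d %| t)%Z) => H.
  case/dvdzP: H => m ->.
  have -> : m * d + d = (m + 1) * d by lia.
  rewrite ![(m * d)%R]mulrC ![((m + 1) * d)%R]mulrC !dvdz_mul2l //.
  by case: ifP => h1; case: ifP => h2 //; move: h1 h2; lia.
have dd : (d %| d * 2)%Z by apply: dvdz_mulr; apply: dvdzz.
case: ifP => h1.
  by case/negP: H; apply: dvdz_trans h1.
case: ifP => h2 //.
case/negP: H; have := dvdz_trans dd h2.
by rewrite rpredDr // dvdzz.
Qed.

Lemma delta_per (d : int) t : delta d (t + d) = delta d t.
Proof. by rewrite /delta rpredDr // dvdzz. Qed.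

Lemma sum_single s (d : nat) r : (s < d)%N ->
  \sum_(j < s.+1) ('C(s, j))%:Z * delta d%:Z (r - (j : nat)%:Z) = ('C(s, `|(r %% d%:Z)%Z|))%:Z.
Proof.
move=> sd.
have d0 : (d%:Z != 0) by apply/eqP; lia.
set x := `|(r %% d%:Z)%Z|%N.
have hx : x%:Z = (r %% d%:Z)%Z by rewrite /x gez0_abs // modz_ge0.
have E : forall j : 'I_s.+1, delta d%:Z (r - (j : nat)%:Z) = ((j : nat) == x)%:Z.
  move=> j; rewrite /delta -eqz_mod_dvd.
  have hj : (j < d)%N by apply: leq_trans (ltn_ord j) _.
  rewrite [X in (_ == X)]modz_small; last by apply/andP; split; lia.
  rewrite -hx; case: eqP => [/eqP|]; first by rewrite eqz_nat => /eqP ->; rewrite eqxx.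
  by move=> h; case: eqP => // h'; case: h; rewrite h'.
under eq_bigr => j _ do rewrite E.
case: (ltnP x s.+1) => hxs.
  rewrite (bigD1 (Ordinal hxs)) //= eqxx mulr1 big1 ?addr0 // => j hj.
  case: eqP => [hj'|]; last by rewrite mulr0.
  by case/eqP: hj; apply: val_inj.
rewrite bin_small // big1 // => j _.
case: eqP => [hj'|]; last by rewrite mulr0.
by have := ltn_ord j; rewrite hj' => h; exfalso; lia.
Qed.

Definition Dl e := delta (2 * (2 * 2 ^ e))%N%:Z.
Definition U0 e := delta (2 * 2 ^ e)%N%:Z.
Definition T0 e := fun t => Dl e t - Dl e (t + (2 * 2 ^ e)%N%:Z).

Lemma U0_split e t : U0 e t = Dl e t + Dl e (t + (2 * 2 ^ e)%N%:Z).
Proof.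
rewrite /U0 /Dl delta_split; last by rewrite eqz_nat muln_eq0 expn_eq0.
by rewrite (PoszM 2 (2 * 2 ^ e)%N) mulrC.
Qed.

Lemma U0_per e : per e (U0 e).
Proof. by move=> t; rewrite /U0 delta_per. Qed.

Lemma T0_aper e : aper e (T0 e).
Proof.
move=> t; rewrite /T0 -addrA.
have -> : ((2 * 2 ^ e)%N%:Z + (2 * 2 ^ e)%N%:Z) = (2 * (2 * 2 ^ e))%N%:Z.
  by rewrite (PoszM 2 (2 * 2 ^ e)%N); lia.
by rewrite /Dl delta_per opprB.
Qed.

Lemma binsum_decomp e n r :
  2 * (binsum_mod e.+2 n r)%:Z = iter n Pop (U0 e) r + iter n Pop (T0 e) r.
Proof.
rewrite binsum_iter !iterP mulr_sumr -big_split /=; apply: eq_bigr => j _.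
rewrite U0_split /T0 /Dl.
have -> : (2 ^ e.+2)%N = (2 * (2 * 2 ^ e))%N by rewrite !expnS.
lia.
Qed.

Lemma UT_mod2 e s r : (2 %| iter s Pop (U0 e) r - iter s Pop (T0 e) r)%Z.
Proof.
rewrite !iterP -sumrB; apply: rpred_sum => j _.
rewrite -mulrBr; apply: dvdz_mull.
rewrite U0_split /T0.
apply/dvdzP; exists (Dl e (r - (j : nat)%:Z + (2 * 2 ^ e)%N%:Z)); lia.
Qed.

Lemma U_small e s r : (s < 2 * 2 ^ e)%N ->
  iter s Pop (U0 e) r = ('C(s, `|(r %% (2 * 2 ^ e)%N%:Z)%Z|))%:Z.
Proof. by move=> hs; rewrite iterP /U0 sum_single. Qed.

Lemma split3 (a b c : int) : a - c = (a - b) + (b - c).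
Proof. lia. Qed.

Lemma Kiter_mod2 e k g r :
  (2 %| iter k (Kop e) g r - g (r - (2 ^ e)%N%:Z * k%:Z))%Z.
Proof.
elim: k r => [|k IH] r.
  by rewrite /= mulr0 subr0 subrr dvdz0.
rewrite iterS.
have H1 := Kop_mod2 e (iter k (Kop e) g) r.
have H2 := IH (r - (2 ^ e)%N%:Z).
have -> : r - (2 ^ e)%N%:Z * k.+1%:Z = r - (2 ^ e)%N%:Z - (2 ^ e)%N%:Z * k%:Z by lia.
rewrite (split3 _ (iter k (Kop e) g (r - (2 ^ e)%N%:Z))) .
by apply: rpredD; [apply: H1 | apply: H2].
Qed.

Lemma main_int e k s r :
  2 * (binsum_mod e.+2 (2 * 2 ^ e * k + s) r)%:Z =
  2 ^+ k * (iter k (Lop e) (iter s Pop (U0 e)) r + iter k (Kop e) (iter s Pop (T0 e)) r).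
Proof.
rewrite binsum_decomp !iterD iterL; last by apply: iter_pres (U0_per e) => f; apply: Pop_per.
rewrite iterK; last by apply: iter_pres (T0_aper e) => f; apply: Pop_aper.
by rewrite mulrDr.
Qed.

Lemma A_even e k f r : (2 <= k)%N -> per e f -> (2 %| iter k (Lop e) f r)%Z.
Proof.
move=> hk hf.
have -> : k = ((k - 2) + 2)%N by rewrite subnK.
rewrite iterD.
set h := iter 2 (Lop e) f.
have Hh : h = fun r => 2 * (h r %/ 2)%Z.
  apply: functional_extensionality => t.
  rewrite mulrC divzK //; exact: LLop_even.
rewrite Hh iter_scal; last exact: Lop_scal.
by apply: dvdz_mulr; apply: dvdzz.
Qed.

Lemma X_parity e k s r : (0 < k)%N ->
  (2 %| (iter k (Lop e) (iter s Pop (U0 e)) r + iter k (Kop e) (iter s Pop (T0 e)) r) - iter s Pop (U0 e) (if k == 1%N then r else r - (2 ^ e)%N%:Z * k%:Z))%Z.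
Proof.
move=> k0.
set Us := iter s Pop (U0 e).
set Ts := iter s Pop (T0 e).
have Hper : per e Us by apply: iter_pres (U0_per e) => f; apply: Pop_per.
have HV := Kiter_mod2 e k Ts r.
have HUT := UT_mod2 e s (r - (2 ^ e)%N%:Z * k%:Z).
rewrite -/Us -/Ts in HUT.
case: eqP => [k1|k1].
  subst k.
  have HA := Lop_mod2 e Us r.
  rewrite /= mulr1 in HV HUT.
  set a := Lop e Us r in HA *.
  set v := Kop e Ts r in HV *.
  have -> : a + v - Us r = (a - Us r - Us (r - (2 ^ e)%N%:Z)) + (v - Ts (r - (2 ^ e)%N%:Z))
       + (2 * Us (r - (2 ^ e)%N%:Z) - (Us (r - (2 ^ e)%N%:Z) - Ts (r - (2 ^ e)%N%:Z))) by lia.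
  apply: rpredD; first by apply: rpredD.
  by apply: rpredB => //; apply: dvdz_mulr; apply: dvdzz.
have k2 : (2 <= k)%N by move: k0 k1; lia.
have HA := A_even e k Us r k2 Hper.
set a := iter k (Lop e) Us r in HA *.
set v := iter k (Kop e) Ts r in HV *.
have -> : a + v - Us (r - (2 ^ e)%N%:Z * k%:Z) = a + (v - Ts (r - (2 ^ e)%N%:Z * k%:Z))
   - (Us (r - (2 ^ e)%N%:Z * k%:Z) - Ts (r - (2 ^ e)%N%:Z * k%:Z)) by lia.
by apply: rpredB => //; apply: rpredD.
Qed.

Lemma mod2q_digits e t :
  `|(t %% (2 * 2 ^ e)%N%:Z)%Z|%N =
  ((2 ^ e) * `|((t %/ (2 ^ e)%N%:Z)%Z %% 2)%Z| + `|(t %% (2 ^ e)%N%:Z)%Z|)%N.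
Proof.
set q := (2 ^ e)%N.
have q0 : (0 < q)%N by rewrite expn_gt0.
have qz : q%:Z != 0 by rewrite eqz_nat -lt0n.
set a := (t %/ q%:Z)%Z.
set b := (t %% q%:Z)%Z.
set d := (a %% 2)%Z.
have hb0 : 0 <= b by apply: modz_ge0.
have hbq : b < q%:Z by apply: ltz_pmod; rewrite ltz_nat.
have hd0 : 0 <= d by apply: modz_ge0.
have hd2 : d < 2 by apply: ltz_pmod.
have Et : t = (a %/ 2)%Z * (2 * q)%N%:Z + (q%:Z * d + b).
  rewrite {1}(divz_eq t q%:Z) -/a -/b {1}(divz_eq a 2) -/d (PoszM 2 q).
  set c := (a %/ 2)%Z.
  lia.
apply/eqP; rewrite -eqz_nat.
rewrite gez0_abs; last by apply: modz_ge0; rewrite eqz_nat muln_eq0 negb_or; apply/andP; split => //; rewrite -lt0n.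
rewrite PoszD gez0_abs //.
rewrite {1}Et modzMDl modz_small.
  by rewrite PoszM gez0_abs.
apply/andP; split; first by apply: addr_ge0 => //; apply: mulr_ge0.
rewrite (PoszM 2 q).
have : d = 0 \/ d = 1 by lia.
by case=> ->; lia.
Qed.

Lemma digit_odd e s t : (s < 2 * 2 ^ e)%N ->
  odd 'C(s, `|(t %% (2 * 2 ^ e)%N%:Z)%Z|) =
  odd 'C(s %/ 2 ^ e, `|((t %/ (2 ^ e)%N%:Z)%Z %% 2)%Z|) && odd 'C(s %% 2 ^ e, `|(t %% (2 ^ e)%N%:Z)%Z|).
Proof.
move=> hs.
have q0 : (0 < 2 ^ e)%N by rewrite expn_gt0.
rewrite mod2q_digits {1}(divn_eq s (2 ^ e)) mulnC lucasQ //.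
  by rewrite ltn_mod.
have qz : (2 ^ e)%N%:Z != 0 by rewrite eqz_nat -lt0n.
rewrite -ltz_nat gez0_abs; last exact: modz_ge0.
by apply: ltz_pmod; rewrite ltz_nat.
Qed.

Lemma final_logic (k s1 : nat) (rs : int) : (0 < k)%N -> (s1 < 2)%N ->
  odd 'C(s1, `|((if k == 1%N then rs else rs - k%:Z) %% 2)%Z|) <->
  (((2 < 2 * k + s1)%N /\ ~ ((2 * k + s1)%N%:Z = 2 * rs + 2 %[mod 4])%Z)
   \/ ((2 * k + s1)%N = 2%N /\ (2 %| rs)%Z)).
Proof.
move=> k0 hs1.
set t := (if k == 1%N then rs else rs - k%:Z).
have Ht : (k = 1%N /\ t = rs) \/ ((2 <= k)%N /\ t = rs - k%:Z).
  rewrite /t; case: eqP => ?; [left | right]; split => //; lia.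
have : ((t %% 2)%Z = 0 \/ (t %% 2)%Z = 1) by lia.
case=> Hb; rewrite Hb; case: s1 hs1 => [|[|//]] _ /=; split => //; lia.
Qed.

Lemma corollary_aux (alpha n : nat) (r : int) (halpha : (2 <= alpha)%N) :
  (exists m : int, lhs_val alpha n r = ((2 * m + 1)%R%:~R : rat))
  <->
  (odd 'C(n %% 2 ^ (alpha - 2),
          `|(r %% (2 ^ (alpha - 2))%:Z)%Z|%N)
   /\ (((2 < n %/ 2 ^ (alpha - 2))%N /\
        ~ ((n %/ 2 ^ (alpha - 2))%:Z
             = 2 * (r %/ (2 ^ (alpha - 2))%:Z)%Z + 2 %[mod 4])%Z)
       \/ ((n %/ 2 ^ (alpha - 2))%N = 2%N /\
           (2 %| (r %/ (2 ^ (alpha - 2))%:Z)%Z)%Z))).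
Proof.
case: alpha halpha => [|[|e]] // _.
have -> : (e.+2 - 2 = e)%N by lia.
set q := (2 ^ e)%N.
have q0 : (0 < q)%N by rewrite expn_gt0.
have qz : q%:Z != 0 by rewrite eqz_nat -lt0n.
set k := (n %/ (2 * q))%N.
set s := (n %% (2 * q))%N.
have hn : n = (2 * q * k + s)%N by rewrite /k /s mulnC -divn_eq.
have hs : (s < 2 * q)%N by rewrite ltn_mod muln_gt0.
have hs1 : (s %/ q < 2)%N by rewrite ltn_divLR // mulnC.
have Hdiv : (n %/ q = 2 * k + s %/ q)%N.
  by rewrite hn mulnAC divnMDl.
have Hmod : (n %% q = s %% q)%N.
  by rewrite hn mulnAC modnMDl.
have Hexp : lucas_exp e.+2 n = k%:Z - 1.
  rewrite /lucas_exp totient_pfactor //= mul1n.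
  have -> : (2 ^ e.+1)%N = (2 * q)%N by rewrite expnS.
  rewrite hn.
  have -> : (2 * q * k + s)%N%:Z - (2 * q)%N%:Z = (k%:Z - 1) * (2 * q)%N%:Z + s%:Z.
    rewrite PoszD PoszM; lia.
  rewrite divzMDl; last by rewrite eqz_nat muln_eq0 negb_or; apply/andP; split => //; rewrite -lt0n.
  by rewrite divz_small ?addr0 //; apply/andP; split => //; rewrite gez0_abs // ltz_nat.
rewrite Hdiv Hmod.
case: (posnP k) => [k0 | kpos].
  split.
    move=> [m]; rewrite /lhs_val Hexp k0.
    have -> : - (0%:Z - 1) = 1 by [].
    rewrite expr1z -[((binsum_mod _ _ _)%:R)]/(((binsum_mod e.+2 n r)%:Z)%:~R : rat).
    rewrite -[(2 : rat)]/((2%:Z)%:~R : rat) -intrM => /intr_inj; lia.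
  rewrite k0; lia.
have HM := main_int e k s r.
rewrite -/q -hn in HM.
set X := (iter k (Lop e) _ r + _) in HM.
have HB : (binsum_mod e.+2 n r)%:Z = 2 ^+ k.-1 * X.
  apply: (mulfI (x := 2)) => //.
  by rewrite HM mulrA -exprS prednK.
have Hl : lhs_val e.+2 n r = X%:~R.
  rewrite /lhs_val Hexp.
  have -> : - (k%:Z - 1) = - (k.-1)%:Z by rewrite -(prednK kpos); lia.
  rewrite -[((binsum_mod _ _ _)%:R)]/(((binsum_mod e.+2 n r)%:Z)%:~R : rat) HB intrM.
  rewrite -exprnN rmorphXn /= mulrAC mulfV ?mul1r //.
  by apply: expf_neq0.
rewrite Hl.
have Hodd : (exists m : int, X%:~R = ((2 * m + 1)%R%:~R : rat)) <-> ~~ (2 %| X)%Z.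
  split => [[m /intr_inj ->]| H]; first lia.
  by exists (X %/ 2)%Z; congr intr; lia.
rewrite Hodd.
have HX := X_parity e k s r kpos.
rewrite -/X -/q in HX.
set t := (if k == 1%N then r else r - q%:Z * k%:Z) in HX.
have -> : (2 %| X)%Z = (2 %| iter s Pop (U0 e) t)%Z.
  by rewrite -(subrK (iter s Pop (U0 e) t) X) rpredDl.
rewrite U_small // dvdzE /= dvdn2 negbK digit_odd // -/q.
have Ht1 : (t %% q%:Z)%Z = (r %% q%:Z)%Z.
  rewrite /t; case: eqP => // _.
  have -> : r - q%:Z * k%:Z = (- k%:Z) * q%:Z + r by rewrite mulNr mulrC addrC.
  by rewrite modzMDl.
have Ht2 : (t %/ q%:Z)%Z = if k == 1%N then (r %/ q%:Z)%Z else (r %/ q%:Z)%Z - k%:Z.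
  rewrite /t; case: eqP => // _.
  have -> : r - q%:Z * k%:Z = (- k%:Z) * q%:Z + r by rewrite mulNr mulrC addrC.
  by rewrite divzMDl // addrC.
rewrite Ht1 Ht2.
rewrite andbC.
split.
  case/andP => H1 H2; split => //.
  by apply/final_logic.
case=> H1 H2; apply/andP; split => //.
by apply/final_logic.
Qed.

Local Close Scope ring_scope.

Theorem corollary1p2 (alpha n : nat) (r : int) (halpha : (2 <= alpha)%N) :
  (exists m : int, lhs_val alpha n r = ((2 * m + 1)%R%:~R : rat))
  <->
  (odd 'C(n %% 2 ^ (alpha - 2),
          `|(r %% (2 ^ (alpha - 2))%:Z)%Z|%N)
   /\ (((2 < n %/ 2 ^ (alpha - 2))%N /\
        ~ ((n %/ 2 ^ (alpha - 2))%:Z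
             = 2 * (r %/ (2 ^ (alpha - 2))%:Z)%Z + 2 %[mod 4])%Z)
       \/ ((n %/ 2 ^ (alpha - 2))%N = 2%N /\
           (2 %| (r %/ (2 ^ (alpha - 2))%:Z)%Z)%Z))).
Proof. exact: corollary_aux. Qed.
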